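(* There is an absolute constant $C$ such that the following holds. Let $G,H$ be finite graphs, $\phi$ a homomorphism from $G$ to $H$, $c=\chi(H)\ge2$, and $d=\max_{v\in V(G)}|\{\phi(w):(v,w)\in E(G)\}|\ge1$. Then $\chi(G)\le C\,d^2\log_2 c$ (the paper's explicit form is $\chi(G)\le 2d(d+1)\log c$).
   Context: A homomorphism from $G$ to $H$ is a map $\phi:V(G)\to V(H)$ such that $(u,v)\in E(G)$ implies $(\phi(u),\phi(v))\in E(H)$. $\chi$ denotes chromatic number. *)

(* Defs.v *)
From mathcomp Require Import all_boot.
From Stdlib Require Import Reals.
Set Implicit Arguments. Unset Strict Implicit. Unset Printing Implicit Defensive.

(* A finite simple graph is a symmetric irreflexive relation e on a finType V. *)

Definition colorable (V : finType) (e : rel V) (k : nat) : bool :=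
  [exists col : {ffun V -> 'I_k}, [forall u, forall v, e u v ==> (col u != col v)]].

Lemma colorable_card (V : finType) (e : rel V) :
  irreflexive e -> exists k, colorable e k.
Proof.
move=> irr; exists #|V|; apply/existsP; exists [ffun v => enum_rank v].
apply/forallP=> u; apply/forallP=> v; apply/implyP=> euv; rewrite !ffunE.
apply/negP=> /eqP /enum_rank_inj Euv; by rewrite Euv irr in euv.
Qed.

Definition chi (V : finType) (e : rel V) (irr : irreflexive e) : nat :=
  ex_minn (colorable_card irr).

Definition is_hom (V W : finType) (e : rel V) (f : rel W) (phi : V -> W) : Prop :=
  forall u v, e u v -> f (phi u) (phi v).

Definition hom_degree (V W : finType) (e : rel V) (phi : V -> W) : nat :=
  \max_(v : V) #|[set phi w | w in [pred w | e v w]]|.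

(* Main.v *)
Require Import Defs.
From mathcomp Require Import all_boot zify.
Set Implicit Arguments. Unset Strict Implicit. Unset Printing Implicit Defensive.

Definition sep c m d (h : {ffun 'I_c -> 'I_m}) (t : 'I_c * {ffun 'I_d -> 'I_c}) : bool :=
  [forall j, (t.2 j != t.1) ==> (h (t.2 j) != h t.1)].

Lemma card_sum (T : finType) (A : {set T}) : #|A| = \sum_(x : T) (x \in A).
Proof.
rewrite -sum1_card big_mkcond /=; apply: eq_bigr => x _; by case: (x \in A).
Qed.

Lemma coll_card c m (x y : 'I_c) : x != y ->
  #|[set h : {ffun 'I_c -> 'I_m} | h x == h y]| * m <= m ^ c.
Proof.
move=> nxy; set A := [set h : {ffun 'I_c -> 'I_m} | h x == h y].
have inj : {in setX A [set: 'I_m] &,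
   injective (fun p : {ffun 'I_c -> 'I_m} * 'I_m => [ffun z => if z == x then p.2 else p.1 z])}.
  move=> [h1 r1] [h2 r2]; rewrite !inE /= => /andP [/eqP e1 _] /andP [/eqP e2 _] /ffunP E.
  have Er : r1 = r2 by have := E x; rewrite !ffunE eqxx.
  rewrite Er; congr pair; apply/ffunP => z.
  case: (eqVneq z x) => [->|nzx].
    rewrite e1 e2; have := E y; rewrite !ffunE eq_sym (negbTE nxy); done.
  by have := E z; rewrite !ffunE (negbTE nzx).
have := max_card [set (fun p : {ffun 'I_c -> 'I_m} * 'I_m => [ffun z => if z == x then p.2 else p.1 z]) p | p in setX A [set: 'I_m]].
by rewrite (card_in_imset inj) cardsX cardsT card_ord card_ffun !card_ord.
Qed.

Lemma bad_card c d (t : 'I_c * {ffun 'I_d -> 'I_c}) : 0 < d ->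
  2 * #|[set h : {ffun 'I_c -> 'I_(d.*2)} | ~~ sep h t]| <= (d.*2) ^ c.
Proof.
move=> d0; set m := d.*2.
have H1 : #|[set h : {ffun 'I_c -> 'I_m} | ~~ sep h t]| <= \sum_(j : 'I_d)
    #|[set h : {ffun 'I_c -> 'I_m} | (t.2 j != t.1) && (h (t.2 j) == h t.1)]|.
  under [X in _ <= X]eq_bigr => j _ do rewrite card_sum; rewrite card_sum.
  rewrite exchange_big /=; apply: leq_sum => h _; rewrite inE.
  case: (boolP (sep h t)) => //= /forallPn [j]; rewrite negb_imply negbK => Hj.
  by rewrite (bigD1 j) //= inE Hj leq_addr.
have H2 : forall j : 'I_d,
    #|[set h : {ffun 'I_c -> 'I_m} | (t.2 j != t.1) && (h (t.2 j) == h t.1)]| * m <= m ^ c.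
  move=> j; case: (boolP (t.2 j != t.1)) => Hj.
    apply: leq_trans _ (@coll_card _ m _ _ Hj); rewrite leq_mul2r; apply/orP; right.
    by apply: subset_leq_card; apply/subsetP => h; rewrite !inE => /andP [].
  apply: leq_trans (_ : 0 <= _) => //; rewrite leqn0 muln_eq0; apply/orP; left.
  by rewrite cards_eq0; apply/eqP/setP => h; rewrite !inE ?(negbTE Hj).
have H3 : #|[set h : {ffun 'I_c -> 'I_m} | ~~ sep h t]| * m <= d * m ^ c.
  apply: leq_trans (leq_mul H1 (leqnn m)) _.
  rewrite big_distrl /=; apply: (@leq_trans (\sum_(j < d) m ^ c)).
    by apply: leq_sum => j _; exact: H2.
  by rewrite sum_nat_const card_ord.
move: H3; rewrite /m -muln2; set X := expn _ c; set b := #|_|.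
move=> H3; rewrite -(leq_pmul2l d0); nia.
Qed.

Lemma exists_good c d (T : {set 'I_c * {ffun 'I_d -> 'I_c}}) : 0 < d ->
  exists h : {ffun 'I_c -> 'I_(d.*2)}, 2 * #|[set t in T | ~~ sep h t]| <= #|T|.
Proof.
move=> d0; set m := d.*2.
have m0 : 0 < m by rewrite /m double_gt0.
have [/existsP //|/existsPn H] := boolP [exists h : {ffun 'I_c -> 'I_m}, 2 * #|[set t in T | ~~ sep h t]| <= #|T|].
have : \sum_(h : {ffun 'I_c -> 'I_m}) (#|T|).+1 <= \sum_(h : {ffun 'I_c -> 'I_m}) 2 * #|[set t in T | ~~ sep h t]|.
  by apply: leq_sum => h _; rewrite ltnNge; exact: H h.
rewrite sum_nat_const card_ffun !card_ord -big_distrr /=.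
under eq_bigr => h _ do rewrite card_sum.
rewrite exchange_big /= big_distrr /=.
have H4 : \sum_(t : 'I_c * {ffun 'I_d -> 'I_c}) 2 * \sum_(h : {ffun 'I_c -> 'I_m}) (t \in [set t in T | ~~ sep h t])
   <= \sum_(t : 'I_c * {ffun 'I_d -> 'I_c}) (if t \in T then m ^ c else 0).
  apply: leq_sum => t _.
  case: (boolP (t \in T)) => tT.
    have := bad_card t d0; rewrite card_sum.
    under eq_bigr => h _ do rewrite inE.
    move=> Hb; rewrite (eq_bigr (fun h => nat_of_bool (~~ sep h t))); first exact: Hb.
    by move=> h _; rewrite inE tT.
  by rewrite big1 // => h _; rewrite inE (negbTE tT).
rewrite -big_mkcond /= sum_nat_const in H4 => H5.
have := leq_trans H5 H4; have : 0 < m ^ c by rewrite expn_gt0 m0.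
set X := m ^ c; set Y := #|T|; nia.
Qed.

Lemma sep_family c d k : 0 < d -> forall T : {set 'I_c * {ffun 'I_d -> 'I_c}}, #|T| < 2 ^ k ->
  exists fam : seq {ffun 'I_c -> 'I_(d.*2)}, size fam <= k /\ forall t, t \in T -> has (fun h => sep h t) fam.
Proof.
move=> d0; elim: k => [|k IH] T HT.
  exists [::]; split => // t tT.
  by move: HT; rewrite expn0 ltnS leqn0 cards_eq0 => /eqP T0; rewrite T0 inE in tT.
have [h Hh] := exists_good T d0.
have [|fam [Hs Hf]] := IH [set t in T | ~~ sep h t].
  by move: Hh HT; rewrite expnS; set a := #|_|; set b := #|T|; set X := 2 ^ k; nia.
exists (h :: fam); split => // t tT /=.
case: (boolP (sep h t)) => //= Hn; apply: Hf; by rewrite inE tT.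
Qed.

From Stdlib Require Import Reals Lra.

Lemma INR_expn a n : INR (expn a n) = (INR a ^ n)%R.
Proof.
elim: n => [|n IH]; first by rewrite expn0.
by rewrite expnS -multE mult_INR IH /=.
Qed.

Theorem mainTheorem8 :
  exists C : R,
  forall (V W : finType) (e : rel V) (f : rel W)
    (esym : symmetric e) (eirr : irreflexive e)
    (fsym : symmetric f) (firr : irreflexive f)
    (phi : V -> W),
    is_hom e f phi ->
    (2 <= chi firr)%N ->
    (1 <= hom_degree e phi)%N ->
    (INR (chi eirr) <= C * INR (hom_degree e phi) ^ 2
                         * (ln (INR (chi firr)) / ln 2))%R.
Proof.
exists 8%R => V W e f esym eirr fsym firr phi hom Hc Hd.
have colH : colorable f (chi firr) by rewrite /chi; case: ex_minnP.
have chimin : forall k, colorable e k -> chi eirr <= k.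
  by move=> k; rewrite /chi; case: ex_minnP => n _ Hm /Hm.
set c := chi firr in Hc colH *. set d := hom_degree e phi in Hd *.
move/existsP: colH => [col /forallP Hcol].
pose psi v := col (phi v).
pose N v := [set psi w | w in [pred w | e v w]].
have Nd : forall v, #|N v| <= d.
  move=> v; apply: (@leq_trans #|[set phi w | w in [pred w | e v w]]|).
    have -> : N v = col @: [set phi w | w in [pred w | e v w]] by rewrite -imset_comp.
    exact: leq_imset_card.
  rewrite /d /hom_degree; exact: (@leq_bigmax V (fun v => #|[set phi w | w in [pred w | e v w]]|) v).
have d0 : 0 < d by [].
have c0 : 0 < c by lia.
pose l := trunc_log 2 c.
have Hl : expn 2 l <= c := trunc_logP (isT : 1 < 2) c0.
have Hl2 : c < expn 2 l.+1 := trunc_log_ltn c (isT : 1 < 2).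
have l1 : 1 <= l.
  rewrite lt0n; apply/negP => /eqP l0; move: Hl2; rewrite -/l l0 expn1; lia.
pose k := l.+1 * d.+1.
have HT : #|[set: 'I_c * {ffun 'I_d -> 'I_c}]| < expn 2 k.
  by rewrite cardsT card_prod card_ffun !card_ord -expnS /k expnM ltn_exp2r.
have [fam [Hs Hf]] := sep_family d0 HT.
set m := d.*2 in fam Hs Hf *.
have m0 : 0 < m by rewrite /m double_gt0.
pose h0 : {ffun 'I_c -> 'I_m} := [ffun _ => Ordinal m0].
pose s v : {ffun 'I_d -> 'I_c} := [ffun j : 'I_d => nth (psi v) (enum (N v)) j].
pose t v := (psi v, s v).
have Hhas : forall v, has (fun h => sep h (t v)) fam by move=> v; apply: Hf; rewrite inE.
pose i v := find (fun h => sep h (t v)) fam.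
have iv : forall v, i v < size fam by move=> v; rewrite -has_find.
have bnd : forall v, i v * m + nth h0 fam (i v) (psi v) < k * m.
  move=> v; have := iv v; have := ltn_ord (nth h0 fam (i v) (psi v)); move: Hs.
  set a := i v; set b := nat_of_ord _; set z := size fam; nia.
pose col' v : 'I_(k * m) := Ordinal (bnd v).
have Hcol' : colorable e (k * m).
  apply/existsP; exists [ffun v => col' v]; apply/forallP => u; apply/forallP => v; apply/implyP => euv.
  rewrite !ffunE; apply/negP => /eqP /(congr1 val) /= E.
  have Ei : i u = i v.
    by have := congr1 (fun n => n %/ m) E; rewrite /= !divnMDl // !divn_small ?addn0.
  have Ex : (nth h0 fam (i u) (psi u) : nat) = nth h0 fam (i v) (psi v).
    by have := congr1 (fun n => n %% m) E; rewrite /= !modnMDl !modn_small.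
  have Hsep := nth_find h0 (Hhas u).
  have vN : psi v \in N u by apply/imsetP; exists v; rewrite ?inE.
  have jlt : index (psi v) (enum (N u)) < d.
    by rewrite (leq_trans _ (Nd u)) // cardE index_mem mem_enum.
  have neq : psi v != psi u.
    have := Hcol (phi u); move/forallP => /(_ (phi v)) /implyP /(_ (hom u v euv)).
    by rewrite eq_sym.
  move/forallP: Hsep => /(_ (Ordinal jlt)) /=.
  rewrite /s ffunE /= nth_index ?mem_enum // neq /= => /negP; apply.
  apply/eqP; apply: val_inj => /=; rewrite -/(i u) Ex -Ei //.
have Hnat : k * m <= 8 * (d * d * l).
  move: l1 d0; rewrite /k /m -muln2; set L := l; set D := d; nia.
have Hchi : (INR (chi eirr) <= 8 * INR d ^ 2 * INR l)%R.
  apply: Rle_trans (le_INR _ _ (leP (leq_trans (chimin _ Hcol') Hnat))) _.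
  rewrite -!multE !mult_INR; simpl INR; lra.
have ln2 : (0 < ln 2)%R by rewrite -ln_1; apply: ln_increasing; lra.
have Hlog : (INR l * ln 2 <= ln (INR c))%R.
  rewrite -ln_pow; last lra.
  have H2 : (2 ^ l <= INR c)%R.
    have E2 : INR 2 = 2%R by simpl; lra.
    by have := le_INR _ _ (leP Hl); rewrite INR_expn E2.
  case: (Rle_lt_or_eq_dec _ _ H2) => [lt|->]; last lra.
  apply: Rlt_le; apply: ln_increasing => //; apply: pow_lt; lra.
have Hl' : (INR l <= ln (INR c) / ln 2)%R.
  apply: (Rmult_le_reg_r (ln 2)) => //.
  rewrite /Rdiv Rmult_assoc Rinv_l; lra.
apply: Rle_trans Hchi _; apply: Rmult_le_compat_l => //.
have := pos_INR d; nra.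
Qed.
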